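(* Consider the algorithm described in the context, and suppose it does not terminate finitely. Then: (i) for each $k\ge1$, if $J_k^Tc_k=0$ then $\tau_{k,\mathrm{trial}}=\infty$ and $\tau_k=\tau_{k-1}$; (ii) there exists a constant $\epsilon>0$ such that for every $k\ge1$ with $J_k^Tc_k\ne0$ and $\tau_k<\tau_{k-1}$ it holds that $\tau_{k-1}\ge\epsilon\|J_k^Tc_k\|_2$.
   Context: Problem: $\min_{x\in\mathbb{R}^n} f(x)+r(x)$ subject to $c(x)=0$, where $f:\mathbb{R}^n\to\mathbb{R}$ and $c:\mathbb{R}^n\to\mathbb{R}^m$ ($m\le n$) are continuously differentiable and $r:\mathbb{R}^n\to\mathbb{R}_{\ge 0}$ is convex. Write $g(x)=\nabla f(x)$, $J(x)=\nabla c(x)^T$, and $f_k=f(x_k)$, $g_k=g(x_k)$, $c_k=c(x_k)$, $J_k=J(x_k)$, $r_k=r(x_k)$. All norms are Euclidean. Merit function: $\Phi_\tau(x)=\tau(f(x)+r(x))+\|c(x)\|_2$. Algorithm: inputs $x_0$, $\alpha_0>0$, $\tau_{-1}>0$; constants $\kappa_v>0$, $\sigma_c,\epsilon_\tau,\xi,\eta\in(0,1)$, $\sigma_u\in(0,1/2]$, $\bar\sigma_u:=\sigma_u+\tfrac12$. For $k=0,1,\dots$: 1. If $J_k^Tc_k\ne0$, compute $v_k$ with $v_k\in\mathrm{Range}(J_k^T)$, $\|v_k\|_2\le\kappa_v\alpha_k\|J_k^Tc_k\|_2$, $\|c_k+J_kv_k\|_2\le\|c_k+J_kv_k^c\|_2$,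 where $v_k^c=-\beta_k^cJ_k^Tc_k$ with $\beta_k^c$ minimizing $\tfrac12\|c_k-\beta J_kJ_k^Tc_k\|_2^2$ over $0\le\beta\le\kappa_v\alpha_k$. Otherwise set $v_k=0$, and if $c_k\ne0$ terminate. 2. Let $u_k$ be the unique minimizer of $g_k^Tu+\tfrac1{2\alpha_k}\|u\|_2^2+r(x_k+v_k+u)$ subject to $J_ku=0$; set $s_k=v_k+u_k$. If $s_k=0$, terminate. 3. Let $D_k:=g_k^Ts_k+\bar\sigma_u\|s_k\|_2^2/\alpha_k+r(x_k+s_k)-r_k$; $\tau_{k,\mathrm{trial}}=\infty$ if $D_k\le0$, else $\tau_{k,\mathrm{trial}}=(1-\sigma_c)(\|c_k\|_2-\|c_k+J_kv_k\|_2)/D_k$. Set $\tau_k=\tau_{k-1}$ if $\tau_{k-1}\le\tau_{k,\mathrm{trial}}$, else $\tau_k=\min\{(1-\epsilon_\tau)\tau_{k-1},\tau_{k,\mathrm{trial}}\}$. 4. With $\Delta q_k(s,\tau):=-\tau(g_k^Ts+\tfrac1{2\alpha_k}\|s\|_2^2+r(x_k+s)-r_k)+\|c_k\|_2-\|c_k+J_ks\|_2$: if $\Phi_{\tau_k}(x_k+s_k)\le\Phi_{\tau_k}(x_k)-\eta\Delta q_k(s_k,\tau_k)$ set $x_{k+1}=x_k+s_k$, $\alpha_{k+1}=\alpha_k$; else $x_{k+1}=x_k$, $\alpha_{k+1}=\xi\alpha_k$. Standing assumption: there is an open convex set $\mathcal X$ containing all iterates $x_k$ and trial points $x_k+s_k$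 such that $f$ is bounded below on $\mathcal X$, $\nabla f$ is bounded and Lipschitz continuous on $\mathcal X$, $c$ is bounded on $\mathcal X$, $J$ is bounded and Lipschitz continuous on $\mathcal X$, and all subgradients of $r$ at points of $\mathcal X$ are uniformly bounded in norm. *)

(* Defs.v *)
From HB Require Import structures.
From mathcomp Require Import all_boot all_order all_algebra.
From mathcomp Require Import all_classical all_reals all_analysis.
Set Implicit Arguments. Unset Strict Implicit. Unset Printing Implicit Defensive.
Import Order.TTheory GRing.Theory Num.Theory.
Import numFieldNormedType.Exports.
Local Open Scope ring_scope.

Definition dotp (R : realType) (p : nat) (u w : 'cV[R]_p) : R :=
  \sum_(i < p) u i 0 * w i 0.

Definition enorm (R : realType) (p : nat) (u : 'cV[R]_p) : R :=
  Num.sqrt (dotp u u).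

Definition convex_fun (R : realType) (n : nat) (r : 'cV[R]_n -> R) : Prop :=
  forall x y (t : R), 0 <= t -> t <= 1 ->
    r (t *: x + (1 - t) *: y) <= t * r x + (1 - t) * r y.

Definition is_convex_set (R : realType) (n : nat) (X : set 'cV[R]_n) : Prop :=
  forall x y (t : R), X x -> X y -> 0 <= t -> t <= 1 -> X (t *: x + (1 - t) *: y).

Definition is_subgrad (R : realType) (n : nat) (r : 'cV[R]_n -> R) (x z : 'cV[R]_n) : Prop :=
  forall y, r x + dotp z (y - x) <= r y.

Definition merit (R : realType) (n m : nat) (f r : 'cV[R]_n -> R)
  (c : 'cV[R]_n -> 'cV[R]_m) (tau : R) (x : 'cV[R]_n) : R :=
  tau * (f x + r x) + enorm (c x).

Definition Dval (R : realType) (n : nat) (r : 'cV[R]_n -> R) (sigma_u alpha : R)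
  (x gx s : 'cV[R]_n) : R :=
  dotp gx s + (sigma_u + 2^-1) * enorm s ^+ 2 / alpha + r (x + s) - r x.

Definition tau_trial (R : realType) (n m : nat) (r : 'cV[R]_n -> R)
  (sigma_c sigma_u alpha : R) (x gx : 'cV[R]_n) (cx : 'cV[R]_m) (Jx : 'M[R]_(m, n))
  (v s : 'cV[R]_n) : \bar R :=
  let D := Dval r sigma_u alpha x gx s in
  if D <= 0 then +oo%E
  else (((1 - sigma_c) * (enorm cx - enorm (cx + Jx *m v)) / D)%:E)%E.

Definition dq (R : realType) (n m : nat) (r : 'cV[R]_n -> R) (alpha tau : R)
  (x gx : 'cV[R]_n) (cx : 'cV[R]_m) (Jx : 'M[R]_(m, n)) (s : 'cV[R]_n) : R :=
  - tau * (dotp gx s + enorm s ^+ 2 / (2 * alpha) + r (x + s) - r x)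
  + enorm cx - enorm (cx + Jx *m s).

(* tau_{k-1}, with tau_{-1} = taum1 *)
Definition tau_prev (R : realType) (taum1 : R) (tau : nat -> R) (k : nat) : R :=
  if k is k'.+1 then tau k' else taum1.

(* Main.v *)
Require Import Defs.
From HB Require Import structures.
From mathcomp Require Import all_boot all_order all_algebra.
From mathcomp Require Import all_classical all_reals all_analysis.
From mathcomp Require Import ring lra.
Set Implicit Arguments. Unset Strict Implicit. Unset Printing Implicit Defensive.
Import Order.TTheory GRing.Theory Num.Theory.
Import numFieldNormedType.Exports.
Local Open Scope ring_scope.

Lemma dotpE (R : realType) p (a b : 'cV[R]_p) : dotp a b = (a^T *m b) 0 0.
Proof. by rewrite /dotp !mxE; apply: eq_bigr => i _; rewrite mxE. Qed.

Lemma dotpC (R : realType) p (a b : 'cV[R]_p) : dotp a b = dotp b a.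
Proof. by rewrite /dotp; apply: eq_bigr => i _; rewrite mulrC. Qed.

Lemma dotpDr (R : realType) p (a b d : 'cV[R]_p) : dotp a (b + d) = dotp a b + dotp a d.
Proof. by rewrite /dotp -big_split; apply: eq_bigr => i _; rewrite mxE mulrDr. Qed.

Lemma dotpZr (R : realType) p (t : R) (a b : 'cV[R]_p) : dotp a (t *: b) = t * dotp a b.
Proof. by rewrite /dotp mulr_sumr; apply: eq_bigr => i _; rewrite mxE mulrCA. Qed.

Lemma dotpNr (R : realType) p (a b : 'cV[R]_p) : dotp a (- b) = - dotp a b.
Proof. by rewrite -scaleN1r dotpZr mulN1r. Qed.

Lemma dotpBr (R : realType) p (a b d : 'cV[R]_p) : dotp a (b - d) = dotp a b - dotp a d.
Proof. by rewrite dotpDr dotpNr. Qed.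

Lemma dotpDl (R : realType) p (a b d : 'cV[R]_p) : dotp (b + d) a = dotp b a + dotp d a.
Proof. by rewrite dotpC dotpDr !(dotpC a). Qed.
Lemma dotpZl (R : realType) p (t : R) (a b : 'cV[R]_p) : dotp (t *: b) a = t * dotp b a.
Proof. by rewrite dotpC dotpZr dotpC. Qed.
Lemma dotpNl (R : realType) p (a b : 'cV[R]_p) : dotp (- b) a = - dotp b a.
Proof. by rewrite dotpC dotpNr dotpC. Qed.
Lemma dotpBl (R : realType) p (a b d : 'cV[R]_p) : dotp (b - d) a = dotp b a - dotp d a.
Proof. by rewrite dotpDl dotpNl. Qed.
Lemma dotp0r (R : realType) p (a : 'cV[R]_p) : dotp a 0 = 0.
Proof. by rewrite /dotp big1 // => i _; rewrite mxE mulr0. Qed.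
Lemma dotp0l (R : realType) p (a : 'cV[R]_p) : dotp 0 a = 0.
Proof. by rewrite dotpC dotp0r. Qed.

Lemma dotp_ge0 (R : realType) p (a : 'cV[R]_p) : 0 <= dotp a a.
Proof. by rewrite /dotp; apply: sumr_ge0 => i _; rewrite -expr2 sqr_ge0. Qed.

Lemma dotp_eq0 (R : realType) p (a : 'cV[R]_p) : dotp a a = 0 -> a = 0.
Proof.
move=> /eqP; rewrite /dotp psumr_eq0; last by move=> i _; rewrite -expr2 sqr_ge0.
move=> /allP H; apply/matrixP => i j; rewrite ord1 mxE.
have := H i (mem_index_enum i); rewrite -expr2 sqrf_eq0 => /eqP //.
Qed.

Lemma dotp_mulmx (R : realType) p q (A : 'M[R]_(p, q)) (a : 'cV[R]_p) (b : 'cV[R]_q) :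
  dotp a (A *m b) = dotp (A^T *m a) b.
Proof. by rewrite !dotpE trmx_mul trmxK mulmxA. Qed.

Lemma enorm_ge0 (R : realType) p (a : 'cV[R]_p) : 0 <= enorm a.
Proof. exact: sqrtr_ge0. Qed.

Lemma enorm_sq (R : realType) p (a : 'cV[R]_p) : enorm a ^+ 2 = dotp a a.
Proof. by rewrite /enorm sqr_sqrtr // dotp_ge0. Qed.

Lemma enormZ (R : realType) p (t : R) (a : 'cV[R]_p) : enorm (t *: a) = `|t| * enorm a.
Proof. by rewrite /enorm dotpZl dotpZr mulrA -expr2 sqrtrM ?sqr_ge0 // sqrtr_sqr. Qed.

Lemma enorm0 (R : realType) p : enorm (0 : 'cV[R]_p) = 0.
Proof. by rewrite /enorm dotp0r sqrtr0. Qed.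

Lemma enorm_eq0 (R : realType) p (a : 'cV[R]_p) : enorm a = 0 -> a = 0.
Proof. by move=> H; apply: dotp_eq0; rewrite -enorm_sq H expr0n. Qed.

Lemma CS (R : realType) p (a b : 'cV[R]_p) : dotp a b <= enorm a * enorm b.
Proof.
have Ha := enorm_sq a; have Hb := enorm_sq b.
have ea := enorm_ge0 a; have eb := enorm_ge0 b.
suff H : dotp a b ^+ 2 <= enorm a ^+ 2 * enorm b ^+ 2.
  have h0 := mulr_ge0 ea eb.
  rewrite -exprMn in H.
  case: (lerP (dotp a b) (enorm a * enorm b)) => // h.
  have : (enorm a * enorm b) ^+ 2 < dotp a b ^+ 2.
    by rewrite ltr_pXn2r // ?qualifE /= ?h0 //; apply: (le_trans h0); exact: ltW.
  by rewrite ltNge H.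
have [b0|bn0] := eqVneq (dotp b b) 0.
  by rewrite (dotp_eq0 b0) dotp0r expr0n /= mulr_ge0 // sqr_ge0.
have Hb0 : 0 < dotp b b by rewrite lt_neqAle eq_sym bn0 dotp_ge0.
have := dotp_ge0 (dotp b b *: a - dotp a b *: b).
rewrite !(dotpBl, dotpBr, dotpZl, dotpZr) (dotpC b a) => H.
rewrite Ha Hb; nra.
Qed.

Definition Vsub (R : realType) p (i : nat) (h : 'cV[R]_p) : Prop :=
  forall j : 'I_p, (i <= j)%N -> h j 0 = 0.

Lemma dotp_delta (R : realType) p (a : 'cV[R]_p) (i : 'I_p) :
  dotp a (delta_mx i 0) = a i 0.
Proof.
rewrite /dotp (bigD1 i) //= big1 ?addr0; first by rewrite mxE !eqxx mulr1.
by move=> j /negbTE ji; rewrite mxE ji mulr0.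
Qed.

Lemma hb_key (R : realType) p (q : 'cV[R]_p -> R) (z w w' e : 'cV[R]_p) (s t : R) :
  convex_fun q -> 0 < s -> 0 < t ->
  dotp z ((t / (s + t)) *: w' + (s / (s + t)) *: w)
    <= q ((t / (s + t)) *: w' + (s / (s + t)) *: w) ->
  (dotp z w' - q (w' - s *: e)) / s <= (q (w + t *: e) - dotp z w) / t.
Proof.
move=> qc s0 t0 H.
have st0 : 0 < s + t by lra.
have st0' : s + t != 0 by rewrite gt_eqF.
set l := t / (s + t).
have l0 : 0 <= l by rewrite divr_ge0 // ltW.
have l1 : l <= 1 by rewrite ler_pdivrMr // mul1r; lra.
have E : l *: (w' - s *: e) + (1 - l) *: (w + t *: e)
         = (t / (s + t)) *: w' + (s / (s + t)) *: w.
  have -> : 1 - l = s / (s + t) by rewrite /l; field.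
  rewrite scalerDr scalerDr scalerN !scalerA addrACA.
  have -> : l * s = s / (s + t) * t by rewrite /l; field.
  by rewrite addNr addr0.
have := qc (w' - s *: e) (w + t *: e) l l0 l1; rewrite E => Hq.
rewrite dotpDr !dotpZr in H.
have K : t * dotp z w' + s * dotp z w <= t * q (w' - s *: e) + s * q (w + t *: e).
  have L1 : 1 - l = s / (s + t) by rewrite /l; field.
  rewrite L1 in Hq.
  have H2 := le_trans H Hq.
  move: H2; rewrite /l.
  set A := dotp z w'; set B := dotp z w; set Q1 := q _; set Q2 := q _.
  have -> : t / (s + t) * A + s / (s + t) * B = (t * A + s * B) / (s + t) by field.
  have -> : t / (s + t) * Q1 + s / (s + t) * Q2 = (t * Q1 + s * Q2) / (s + t) by field.
  by rewrite ler_pdivrMr // divfK.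
rewrite ler_pdivrMr // mulrAC ler_pdivlMr //.
nra.
Qed.

Lemma hb_step (R : realType) p (q : 'cV[R]_p -> R) (i : nat) (Hi : (i < p)%N) (z : 'cV[R]_p) :
  convex_fun q -> Vsub i z -> (forall h, Vsub i h -> dotp z h <= q h) ->
  exists z', Vsub i.+1 z' /\ (forall h, Vsub i.+1 h -> dotp z' h <= q h).
Proof.
move=> qc Vz Hz.
pose io := Ordinal Hi.
pose e : 'cV[R]_p := delta_mx io 0.
have eE : forall j : 'I_p, (i <= j)%N -> j != io -> e j 0 = 0.
  by move=> j _ jn; rewrite mxE (negbTE jn).
have Vcomb : forall a b (w w' : 'cV[R]_p), Vsub i w -> Vsub i w' -> Vsub i (a *: w' + b *: w).
  by move=> a b w w' Vw Vw' j ij; rewrite !mxE Vw // Vw' // !mulr0 addr0.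
pose L : set R := fun y => exists w s, Vsub i w /\ 0 < s /\ y = (dotp z w - q (w - s *: e)) / s.
have ubL : forall w t, Vsub i w -> 0 < t -> ubound L ((q (w + t *: e) - dotp z w) / t).
  move=> w t Vw t0 y [w' [s [Vw' [s0 ->]]]].
  apply: hb_key => //; apply: Hz; exact: Vcomb.
have L0 : (L !=set0)%classic.
  exists ((dotp z 0 - q (0 - 1 *: e)) / 1); exists 0, 1; split; last by split.
  by move=> j _; rewrite mxE.
have hL : has_ubound L by exists ((q (0 + 1 *: e) - dotp z 0) / 1); apply: ubL => //; move=> j _; rewrite mxE.
pose a := sup L.
exists (z + a *: e); split.
  move=> j ij; rewrite !mxE Vz ?(ltnW ij) //.
  have -> : (j == io) = false by apply/negbTE; apply/eqP => E; move: ij; rewrite E /= ltnn.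
  by rewrite andFb mulr0 addr0.
move=> h Vh.
pose t := h io 0.
pose w := h - t *: e.
have Vw : Vsub i w.
  move=> j ij; rewrite /w /e !mxE.
  have [E|jn] := eqVneq j io; first by rewrite E !eqxx mulr1 subrr.
  rewrite andFb mulr0 subr0 Vh //.
  move: ij jn; rewrite leq_eqVlt => /orP [/eqP E|//] jn; exfalso.
  by apply: (negP jn); apply/eqP; apply: val_inj; rewrite /= -E.
have hE : h = w + t *: e by rewrite /w subrK.
have dze : dotp z e = 0 by rewrite dotp_delta Vz.
have w0 : w io 0 = 0 by apply: Vw => /=.
have ee : dotp e e = 1 by rewrite dotp_delta /e mxE !eqxx.
clearbody w t; subst h.
have -> : dotp (z + a *: e) (w + t *: e) = dotp z w + a * t.
  rewrite dotpDl !dotpDr !dotpZr !dotpZl dze mulr0 addr0 ee mulr1.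
  by rewrite (dotpC e w) dotp_delta w0 mulr0 add0r mulrC.
have [t0|t0|t0] := ltrgtP t 0.
- have s0 : 0 < - t by rewrite oppr_gt0.
  have : L ((dotp z w - q (w - (- t) *: e)) / (- t)) by exists w, (- t).
  move=> /(ub_le_sup hL); rewrite scaleNr opprK ler_pdivrMr // => H.
  rewrite -/a in H; nra.
- have := ge_sup L0 (ubL w t Vw t0); rewrite -/a ler_pdivlMr // => H; lra.
- by rewrite t0 mulr0 addr0 scale0r addr0; apply: Hz.
Qed.

Lemma subgrad_exists (R : realType) p (r : 'cV[R]_p -> R) (y : 'cV[R]_p) :
  convex_fun r -> exists z, is_subgrad r y z.
Proof.
move=> rc.
pose q := fun h => r (y + h) - r y.
have qc : convex_fun q.
  move=> a b t t0 t1; rewrite /q.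
  have -> : y + (t *: a + (1 - t) *: b) = t *: (y + a) + (1 - t) *: (y + b).
    by rewrite !scalerDr addrACA -scalerDl subrKC scale1r.
  have := rc (y + a) (y + b) t t0 t1; lra.
have : forall i, (i <= p)%N -> exists z, Vsub i z /\ forall h, Vsub i h -> dotp z h <= q h.
  elim => [_|i IH ip].
    exists 0; split; first by move=> j _; rewrite mxE.
    move=> h Vh; have -> : h = 0 by apply/matrixP => j k; rewrite ord1 Vh // mxE.
    by rewrite dotp0r /q addr0 subrr.
  have [z [Vz Hz]] := IH (ltnW ip).
  exact: (hb_step ip qc Vz Hz).
move=> /(_ p (leqnn p)) [z [_ Hz]].
exists z => w.
have Vp : Vsub p (w - y) by move=> j jp; exfalso; move: (ltn_ord j); rewrite ltnNge jp.
have := Hz (w - y) Vp.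
rewrite /q subrKC; lra.
Qed.

Lemma open_small (R : realType) p (X : set 'cV[R]_p) (e d : 'cV[R]_p) :
  open X -> X e -> exists e0 : R, 0 < e0 /\ forall t, 0 < t -> t <= e0 -> X (e - t *: d).
Proof.
move=> oX Xe.
have : nbhs e X by move: oX; rewrite openE => /(_ e Xe).
move=> /nbhs_ballP [del /= del0 Hb].
exists (del / 2 / (`|d| + 1)); split.
  by rewrite divr_gt0 // ?divr_gt0 // ltr_wpDl.
move=> t t0 te; apply: Hb.
rewrite -ball_normE /= opprB addrC subrK normrZ gtr0_norm //.
have d0 : 0 <= `|d| by [].
have d1 : 0 < `|d| + 1 by lra.
move: te; rewrite ler_pdivlMr // => te.
nra.
Qed.

Lemma key_min (R : realType) p q (r : 'cV[R]_p -> R) (g0 b u : 'cV[R]_p) (al : R)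
  (J0 : 'M[R]_(q, p)) :
  J0 *m u = 0 ->
  (forall w, J0 *m w = 0 ->
     dotp g0 u + (2 * al)^-1 * enorm u ^+ 2 + r (b + u)
     <= dotp g0 w + (2 * al)^-1 * enorm w ^+ 2 + r (b + w)) ->
  forall t, 0 < t -> t <= 1 ->
  t * dotp g0 u + (2 * t - t ^+ 2) * ((2 * al)^-1 * enorm u ^+ 2) + r (b + u)
  <= r (b + u - t *: u).
Proof.
move=> Ju Hmin t t0 t1.
have := Hmin ((1 - t) *: u); rewrite -scalemxAr Ju scaler0 => /(_ erefl).
rewrite dotpZr enormZ exprMn ger0_norm ?subr_ge0 //.
have -> : b + (1 - t) *: u = b + u - t *: u by rewrite scalerBl scale1r addrA.
set G := dotp g0 u; set Q := (2 * al)^-1 * enorm u ^+ 2; set r1 := r (b + u); set r2 := r _.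
have -> : (2 * al)^-1 * ((1 - t) ^+ 2 * enorm u ^+ 2) = (1 - t) ^+ 2 * Q by rewrite /Q; ring.
move=> H.
have E : t * G + (2 * t - t ^+ 2) * Q + r1 - r2
         = (G + Q + r1) - ((1 - t) * G + (1 - t) ^+ 2 * Q + r2) by ring.
lra.
Qed.

Lemma lim_le (R : realType) (D B C e0 : R) :
  0 < e0 -> 0 <= C -> (forall t, 0 < t -> t <= e0 -> D <= B + t * C) -> D <= B.
Proof.
move=> e00 C0 H; rewrite leNgt; apply/negP => DB.
have q0 : 0 < (D - B) / (C + 1) by rewrite divr_gt0 //; lra.
pose t := Order.min e0 ((D - B) / (C + 1)).
have t0 : 0 < t by rewrite /t lt_min e00 q0.
have te : t <= e0 by rewrite /t ge_min lexx.
have tq : t <= (D - B) / (C + 1) by rewrite /t ge_min lexx orbT.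
have := H t t0 te.
move: tq; rewrite ler_pdivlMr; last lra.
nra.
Qed.

Lemma lip_lower (R : realType) p (r : 'cV[R]_p -> R) (X : set 'cV[R]_p) (K : R) (y y' : 'cV[R]_p) :
  convex_fun r -> (forall y z, X y -> is_subgrad r y z -> enorm z <= K) -> X y ->
  r y - K * enorm (y' - y) <= r y'.
Proof.
move=> rc HK Xy.
have [z Hz] := subgrad_exists y rc.
have := Hz y'; have := HK y z Xy Hz.
have := CS (- z) (y' - y); rewrite dotpNl.
have : enorm (- z) = enorm z by rewrite -scaleN1r enormZ normrN1 mul1r.
have := enorm_ge0 (y' - y).
move=> h1 ->; nra.
Qed.

Lemma enormN (R : realType) p (a : 'cV[R]_p) : enorm (- a) = enorm a.
Proof. by rewrite /enorm dotpNl dotpNr opprK. Qed.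

Lemma Dbound (R : realType) p q (r : 'cV[R]_p -> R) (X : set 'cV[R]_p) (K G : R)
  (x g0 v u : 'cV[R]_p) (al sigu : R) (J0 : 'M[R]_(q, p)) :
  convex_fun r -> open X -> (forall y z, X y -> is_subgrad r y z -> enorm z <= K) ->
  X x -> X (x + (v + u)) -> enorm g0 <= G -> 0 < al -> 0 <= sigu -> sigu <= 2^-1 ->
  dotp v u = 0 -> J0 *m u = 0 ->
  (forall w, J0 *m w = 0 ->
     dotp g0 u + (2 * al)^-1 * enorm u ^+ 2 + r (x + v + u)
     <= dotp g0 w + (2 * al)^-1 * enorm w ^+ 2 + r (x + v + w)) ->
  Dval r sigu al x g0 (v + u) <= (G + K) * enorm v + enorm v ^+ 2 / al.
Proof.
move=> rc oX HK Xx Xe Hg al0 s0 s1 vu Ju Hmin.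
set e := x + (v + u).
have [e0 [e00 He0]] := open_small u oX Xe.
set Q := (2 * al)^-1 * enorm u ^+ 2.
have Q0 : 0 <= Q by rewrite mulr_ge0 // ?invr_ge0 ?sqr_ge0 //; lra.
have nv := enorm_ge0 v.
have Hgv : dotp g0 v <= G * enorm v.
  have := CS g0 v; have := enorm_ge0 g0; nra.
have Es : enorm (v + u) ^+ 2 = enorm v ^+ 2 + enorm u ^+ 2.
  by rewrite !enorm_sq dotpDl !dotpDr vu (dotpC u v) vu addr0 add0r.
have Hre : forall t, 0 < t -> t <= Order.min e0 1 ->
    r e - r x <= - dotp g0 u - (2 - t) * Q + K * enorm v.
  move=> t t0; rewrite le_min => /andP [te t1].
  have km := key_min Ju Hmin t0 t1.
  have Exe : x + v + u = e by rewrite /e addrA.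
  rewrite Exe -/Q in km.
  have cv := rc x e t (ltW t0) t1.
  have E0 : t *: x + (1 - t) *: e = e - t *: (v + u).
    by rewrite /e; apply/matrixP => i j; rewrite !mxE; ring.
  rewrite E0 in cv.
  have lp := lip_lower (e - t *: (v + u)) rc HK (He0 t t0 te).
  have E3 : e - t *: (v + u) - (e - t *: u) = - (t *: v).
    by apply/matrixP => i j; rewrite !mxE; ring.
  rewrite E3 in lp.
  rewrite enormN enormZ gtr0_norm // -/e in lp.
  have H : t * (r e - r x) <= t * (- dotp g0 u - (2 - t) * Q + K * enorm v).
    have E1 : t * (- dotp g0 u - (2 - t) * Q + K * enorm v)
      = - (t * dotp g0 u + (2 * t - t ^+ 2) * Q) + K * (t * enorm v) by ring.
    rewrite E1 mulrBr; rewrite mulrBl mul1r in cv; lra.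
  by rewrite ler_pM2l in H.
rewrite /Dval -/e.
apply: (lim_le (e0 := Order.min e0 1) (C := Q)); first by rewrite lt_min e00 ltr01.
  done.
move=> t t0 te; have := Hre t t0 te.
rewrite Es.
have E2 : (sigu + 2^-1) * (enorm v ^+ 2 + enorm u ^+ 2) / al
   = (sigu + 2^-1) * (enorm v ^+ 2 / al) + (2 * sigu + 1) * Q.
  rewrite /Q; field; lra.
rewrite E2 dotpDr.
have V0 : 0 <= enorm v ^+ 2 / al by rewrite divr_ge0 ?sqr_ge0 // ltW.
have Hk : K * enorm v <= K * enorm v by [].
nra.
Qed.

Lemma cauchy_dec (R : realType) m n (c : 'cV[R]_m) (J0 : 'M[R]_(m, n)) (v : 'cV[R]_n)
  (betac bmax : R) :
  0 <= betac <= bmax ->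
  (forall beta : R, 0 <= beta <= bmax ->
     2^-1 * enorm (c - betac *: (J0 *m J0^T *m c)) ^+ 2
     <= 2^-1 * enorm (c - beta *: (J0 *m J0^T *m c)) ^+ 2) ->
  enorm (c + J0 *m v) <= enorm (c + J0 *m (- betac *: (J0^T *m c))) ->
  forall beta, 0 <= beta <= bmax ->
  enorm (c + J0 *m v) ^+ 2 <= enorm (c - beta *: (J0 *m J0^T *m c)) ^+ 2.
Proof.
move=> hb Hmin Hv beta hbeta.
have E : J0 *m (- betac *: (J0^T *m c)) = - (betac *: (J0 *m J0^T *m c)).
  by rewrite -scalemxAr mulmxA scaleNr.
rewrite E in Hv.
have := Hmin beta hbeta.
have := enorm_ge0 (c + J0 *m v).
have := enorm_ge0 (c - betac *: (J0 *m J0^T *m c)).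
move=> h1 h2 h3.
have : enorm (c + J0 *m v) ^+ 2 <= enorm (c - betac *: (J0 *m J0^T *m c)) ^+ 2.
  by rewrite ler_pXn2r // ?qualifE /= ?h1 ?h2.
lra.
Qed.

Lemma JT_bound (R : realType) m n (c : 'cV[R]_m) (J0 : 'M[R]_(m, n)) (KJ : R) :
  0 <= KJ -> (forall h, enorm (J0 *m h) <= KJ * enorm h) -> enorm (J0^T *m c) <= KJ * enorm c.
Proof.
move=> KJ0 HJ.
set w := J0^T *m c.
have E : enorm w ^+ 2 = dotp c (J0 *m w) by rewrite enorm_sq dotp_mulmx.
have := CS c (J0 *m w); rewrite -E => h.
have := HJ w; have := enorm_ge0 c; have := enorm_ge0 w.
move=> w0 c0 hj.
have [W0|Wp] := eqVneq (enorm w) 0.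
  by rewrite W0; apply: mulr_ge0.
have Wp' : 0 < enorm w by rewrite lt_neqAle eq_sym Wp w0.
have : enorm w * enorm w <= enorm w * (KJ * enorm c) by rewrite -expr2; nra.
by rewrite ler_pM2l.
Qed.

Lemma final_alg (R : realType) (al W KJ Kc nv D N beta m0 tau sc kv GK : R) :
  0 < al -> 0 < W -> W <= KJ * Kc -> 0 < KJ -> 0 < Kc -> 0 <= nv ->
  nv <= kv * al * W -> 0 < kv -> 0 <= GK ->
  0 < D -> D <= GK * nv + nv ^+ 2 / al -> 0 <= N -> beta * W ^+ 2 <= 2 * Kc * N ->
  al * m0 <= beta -> 0 < m0 -> sc < 1 -> (1 - sc) * N / D < tau -> 0 <= tau ->
  (1 - sc) * m0 / (2 * Kc * (GK * kv + kv ^+ 2 * KJ * Kc + 1)) * W <= tau.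
Proof.
move=> al0 W0 WK KJ0 Kc0 nv0 nvb kv0 GK0 D0 Db N0 bN bm m00 sc1 tt t0.
set C := GK * kv + kv ^+ 2 * KJ * Kc + 1.
have C0 : 0 < C by rewrite /C; have := mulr_ge0 GK0 (ltW kv0); have := mulr_ge0 (mulr_ge0 (sqr_ge0 kv) (ltW KJ0)) (ltW Kc0); lra.
have h1 : nv ^+ 2 / al <= kv ^+ 2 * al * W ^+ 2.
  rewrite ler_pdivrMr //.
  have : nv ^+ 2 <= (kv * al * W) ^+ 2 by rewrite ler_pXn2r // ?qualifE /= ?nv0 //; apply: (le_trans nv0).
  move=> h; apply: (le_trans h); rewrite !exprMn; by rewrite le_eqVlt; apply/orP; left; apply/eqP; ring.
have h2 : D <= al * W * C.
  have e1 : GK * nv <= GK * (kv * al * W) by rewrite ler_wpM2l.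
  have e2 : kv ^+ 2 * al * W ^+ 2 <= kv ^+ 2 * al * W * (KJ * Kc).
    have P0 : 0 <= kv ^+ 2 * al * W by rewrite !mulr_ge0 ?sqr_ge0 ?ltW.
    have -> : kv ^+ 2 * al * W ^+ 2 = (kv ^+ 2 * al * W) * W by ring.
    by rewrite ler_wpM2l.
  have e3 : al * W * C = GK * (kv * al * W) + kv ^+ 2 * al * W * (KJ * Kc) + al * W by rewrite /C; ring.
  have := mulr_gt0 al0 W0; lra.
have h3 : (1 - sc) * N < tau * (al * W * C).
  move: tt; rewrite ltr_pdivrMr // => tt.
  apply: (lt_le_trans tt); exact: ler_wpM2l.
have h4 : (1 - sc) * (al * m0 * W ^+ 2) <= (1 - sc) * (2 * Kc * N).
  apply: ler_wpM2l; first lra.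
  apply: le_trans bN; apply: ler_wpM2r => //; exact: sqr_ge0.
have h5 : (al * W) * ((1 - sc) * m0 * W) < (al * W) * (2 * Kc * (tau * C)).
  have E1 : (al * W) * ((1 - sc) * m0 * W) = (1 - sc) * (al * m0 * W ^+ 2) by ring.
  have E2 : (al * W) * (2 * Kc * (tau * C)) = 2 * Kc * (tau * (al * W * C)) by ring.
  rewrite E1 E2; apply: (le_lt_trans h4).
  have E3 : (1 - sc) * (2 * Kc * N) = 2 * Kc * ((1 - sc) * N) by ring.
  by rewrite E3 ltr_pM2l // mulr_gt0.
rewrite ltr_pM2l ?mulr_gt0 // in h5.
rewrite mulrAC ler_pdivrMr ?mulr_gt0 //.
have E4 : tau * (2 * Kc * C) = 2 * Kc * (tau * C) by ring.
rewrite E4; exact: ltW.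
Qed.

Lemma num_bound (R : realType) m n (c : 'cV[R]_m) (J0 : 'M[R]_(m, n)) (v : 'cV[R]_n)
  (beta KJ Kc : R) :
  0 <= beta -> beta * KJ ^+ 2 <= 1 -> 0 <= KJ ->
  (forall h, enorm (J0 *m h) <= KJ * enorm h) -> enorm c <= Kc ->
  enorm (c + J0 *m v) ^+ 2 <= enorm (c - beta *: (J0 *m J0^T *m c)) ^+ 2 ->
  enorm (c + J0 *m v) <= enorm c ->
  beta * enorm (J0^T *m c) ^+ 2 <= 2 * Kc * (enorm c - enorm (c + J0 *m v)).
Proof.
move=> b0 bK KJ0 HJ cK Hsq Hle.
set w := J0^T *m c.
have EM : J0 *m J0^T *m c = J0 *m w by rewrite -mulmxA.
rewrite EM in Hsq.
have Ecm : dotp c (J0 *m w) = enorm w ^+ 2 by rewrite dotp_mulmx enorm_sq.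
have Ex : enorm (c - beta *: (J0 *m w)) ^+ 2
   = enorm c ^+ 2 - 2 * beta * enorm w ^+ 2 + beta ^+ 2 * enorm (J0 *m w) ^+ 2.
  rewrite !enorm_sq !(dotpBl, dotpBr, dotpZl, dotpZr) (dotpC (J0 *m w) c) Ecm -(enorm_sq w).
  ring.
have hM := HJ w.
have hM2 : enorm (J0 *m w) ^+ 2 <= KJ ^+ 2 * enorm w ^+ 2.
  rewrite -exprMn ler_pXn2r // ?qualifE /= ?enorm_ge0 ?mulr_ge0 ?enorm_ge0 //.
have hb2 : beta ^+ 2 * enorm (J0 *m w) ^+ 2 <= beta * enorm w ^+ 2.
  have := ler_wpM2l (sqr_ge0 beta) hM2.
  move=> h; apply: (le_trans h).
  have -> : beta ^+ 2 * (KJ ^+ 2 * enorm w ^+ 2) = (beta * KJ ^+ 2) * (beta * enorm w ^+ 2) by ring.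
  rewrite ler_piMl //; exact: mulr_ge0 b0 (sqr_ge0 _).
have nc := enorm_ge0 c; have ncv := enorm_ge0 (c + J0 *m v).
have key : beta * enorm w ^+ 2 <= (enorm c - enorm (c + J0 *m v)) * (enorm c + enorm (c + J0 *m v)).
  have -> : (enorm c - enorm (c + J0 *m v)) * (enorm c + enorm (c + J0 *m v))
     = enorm c ^+ 2 - enorm (c + J0 *m v) ^+ 2 by ring.
  lra.
apply: (le_trans key).
rewrite mulrC; apply: ler_wpM2r; first lra.
lra.
Qed.
Unset Implicit Arguments.

Theorem lemma3p9 (R : realType) (n m : nat)
  (f : 'cV[R]_n -> R) (c : 'cV[R]_n -> 'cV[R]_m) (r : 'cV[R]_n -> R)
  (g : 'cV[R]_n -> 'cV[R]_n) (J : 'cV[R]_n -> 'M[R]_(m, n))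
  (kappa_v sigma_c eps_tau xi eta sigma_u alpha0 taum1 : R)
  (x : nat -> 'cV[R]_n) (alpha : nat -> R) (tau : nat -> R)
  (v u : nat -> 'cV[R]_n) :
  (m <= n)%N ->
  (* problem data: f, c continuously differentiable with gradient g, Jacobian J *)
  (forall y, differentiable f y /\ forall h, 'd f y h = dotp (g y) h) ->
  continuous g ->
  (forall y, differentiable c y /\ forall h, 'd c y h = J y *m h) ->
  continuous J ->
  (* r convex, nonnegative *)
  convex_fun r -> (forall y, 0 <= r y) ->
  (* constants *)
  0 < kappa_v -> 0 < sigma_c < 1 -> 0 < eps_tau < 1 -> 0 < xi < 1 -> 0 < eta < 1 ->
  0 < sigma_u <= 2^-1 -> 0 < alpha0 -> 0 < taum1 ->
  (* initialisation *)
  alpha 0%N = alpha0 ->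
  (* step 1 *)
  (forall k, (J (x k))^T *m c (x k) != 0 ->
     (exists w : 'cV[R]_m, v k = (J (x k))^T *m w) /\
     enorm (v k) <= kappa_v * alpha k * enorm ((J (x k))^T *m c (x k)) /\
     (exists betac : R,
        0 <= betac <= kappa_v * alpha k /\
        (forall beta : R, 0 <= beta <= kappa_v * alpha k ->
           2^-1 * enorm (c (x k) - betac *: (J (x k) *m (J (x k))^T *m c (x k))) ^+ 2
           <= 2^-1 * enorm (c (x k) - beta *: (J (x k) *m (J (x k))^T *m c (x k))) ^+ 2) /\
        enorm (c (x k) + J (x k) *m v k)
        <= enorm (c (x k) + J (x k) *m (- betac *: ((J (x k))^T *m c (x k)))))) ->
  (forall k, (J (x k))^T *m c (x k) = 0 -> v k = 0) ->
  (* step 2: u_k minimizes the subproblem over the null space of J_k *)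
  (forall k, J (x k) *m u k = 0 /\
     forall w : 'cV[R]_n, J (x k) *m w = 0 ->
       dotp (g (x k)) (u k) + (2 * alpha k)^-1 * enorm (u k) ^+ 2 + r (x k + v k + u k)
       <= dotp (g (x k)) w + (2 * alpha k)^-1 * enorm w ^+ 2 + r (x k + v k + w)) ->
  (* step 3: merit parameter update *)
  (forall k,
     let ttr := tau_trial r sigma_c sigma_u (alpha k) (x k) (g (x k)) (c (x k)) (J (x k))
                  (v k) (v k + u k) in
     if ((tau_prev taum1 tau k)%:E <= ttr)%E then tau k = tau_prev taum1 tau k
     else (tau k)%:E = Order.min ((1 - eps_tau) * tau_prev taum1 tau k)%:E ttr) ->
  (* step 4: acceptance test *)
  (forall k,
     let s := v k + u k in
     if merit f r c (tau k) (x k + s)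
        <= merit f r c (tau k) (x k)
           - eta * dq r (alpha k) (tau k) (x k) (g (x k)) (c (x k)) (J (x k)) s
     then x k.+1 = x k + s /\ alpha k.+1 = alpha k
     else x k.+1 = x k /\ alpha k.+1 = xi * alpha k) ->
  (* the algorithm does not terminate finitely *)
  (forall k, (J (x k))^T *m c (x k) = 0 -> c (x k) = 0) ->
  (forall k, v k + u k != 0) ->
  (* standing assumption *)
  (exists X : set 'cV[R]_n,
     open X /\ is_convex_set X /\
     (forall k, X (x k)) /\ (forall k, X (x k + (v k + u k))) /\
     (exists lb : R, forall y, X y -> lb <= f y) /\
     (exists K : R, forall y, X y -> enorm (g y) <= K) /\
     (exists L : R, forall y z, X y -> X z -> enorm (g y - g z) <= L * enorm (y - z)) /\
     (exists K : R, forall y, X y -> enorm (c y) <= K) /\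
     (exists K : R, forall y h, X y -> enorm (J y *m h) <= K * enorm h) /\
     (exists L : R, forall y z h, X y -> X z ->
        enorm ((J y - J z) *m h) <= L * enorm (y - z) * enorm h) /\
     (exists K : R, forall y z, X y -> is_subgrad r y z -> enorm z <= K)) ->
  (* conclusion *)
  (forall k, (1 <= k)%N -> (J (x k))^T *m c (x k) = 0 ->
     tau_trial r sigma_c sigma_u (alpha k) (x k) (g (x k)) (c (x k)) (J (x k))
       (v k) (v k + u k) = +oo%E /\ tau k = tau k.-1) /\
  (exists eps : R, 0 < eps /\
     forall k, (1 <= k)%N -> (J (x k))^T *m c (x k) != 0 -> tau k < tau k.-1 ->
       eps * enorm ((J (x k))^T *m c (x k)) <= tau k.-1).
Proof.
move=> mn Hf Hgc Hc HJc rc r0 kv0 /andP[sc0 sc1] /andP[et0 et1] /andP[xi0 xi1] /andP[eta0 eta1]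
  /andP[su0 su1] al00 tm0 Hal0 H1 H1' H2 H3 H4 Hc0 Hnz
  [X [oX [cX [Xx [Xe [_ [[G HG] [_ [[Kc HKc] [[KJ HKJ] [_ [Kr HKr]]]]]]]]]]]].
have Hal : forall k, 0 < alpha k /\ alpha k <= alpha0.
  elim => [|k [IH1 IH2]]; first by rewrite Hal0; split => //.
  have h4 := H4 k; cbv zeta in h4; move: h4.
  case: ifP => _ [_ ->]; first by split.
  split; first exact: mulr_gt0.
  apply: le_trans IH2; rewrite ler_piMl //; exact: ltW.
pose KJ' := `|KJ| + 1.
have KJ'0 : 0 < KJ' by rewrite /KJ'; have := normr_ge0 KJ; lra.
have HJ' : forall k h, enorm (J (x k) *m h) <= KJ' * enorm h.
  move=> k h; apply: le_trans (HKJ _ h (Xx k)) _; apply: ler_wpM2r; first exact: enorm_ge0.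
  rewrite /KJ'; have := ler_norm KJ; lra.
pose Kc' := `|Kc| + 1.
have Kc'0 : 0 < Kc' by rewrite /Kc'; have := normr_ge0 Kc; lra.
have HC' : forall k, enorm (c (x k)) <= Kc'.
  move=> k; apply: le_trans (HKc _ (Xx k)) _; rewrite /Kc'; have := ler_norm Kc; lra.
pose G' := `|G|.
have G'0 : 0 <= G' by rewrite /G'.
have HG' : forall k, enorm (g (x k)) <= G'.
  move=> k; apply: le_trans (HG _ (Xx k)) _; exact: ler_norm.
pose Kr' := `|Kr|.
have Kr'0 : 0 <= Kr' by rewrite /Kr'.
have HKr' : forall y z, X y -> is_subgrad r y z -> enorm z <= Kr'.
  move=> y z Xy Hz; apply: le_trans (HKr _ _ Xy Hz) _; exact: ler_norm.
have Hvu : forall k, dotp (v k) (u k) = 0.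
  move=> k; have [E|NE] := eqVneq ((J (x k))^T *m c (x k)) 0.
    by rewrite (H1' k E) dotp0l.
  have [[w0 ->] _] := H1 k NE.
  by rewrite -dotp_mulmx (proj1 (H2 k)) dotp0r.
have HD : forall k, Dval r sigma_u (alpha k) (x k) (g (x k)) (v k + u k)
    <= (G' + Kr') * enorm (v k) + enorm (v k) ^+ 2 / alpha k.
  move=> k; exact: (Dbound rc oX HKr' (Xx k) (Xe k) (HG' k) (proj1 (Hal k)) (ltW su0) su1 (Hvu k)
     (proj1 (H2 k)) (proj2 (H2 k))).
have HN : forall k, enorm (c (x k) + J (x k) *m v k) <= enorm (c (x k)).
  move=> k; have [E|NE] := eqVneq ((J (x k))^T *m c (x k)) 0.
    by rewrite (H1' k E) mulmx0 addr0.
  have [_ [_ [bc [hbc [Hmin Hv]]]]] := H1 k NE.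
  have b0 : (0 : R) <= 0 <= kappa_v * alpha k.
    rewrite lexx /=; apply: mulr_ge0; [exact: ltW | exact: ltW (proj1 (Hal k))].
  have := cauchy_dec hbc Hmin Hv b0.
  rewrite scale0r subr0 ler_pXn2r // ?qualifE /= ?enorm_ge0 //.
have Htau : forall k, 0 <= tau_prev taum1 tau k.
  elim => [|k IH]; first by rewrite /= ltW.
  rewrite /=; have h3 := H3 k; cbv zeta in h3; move: h3.
  case: ifP => _; first by move=> ->.
  move=> E; suff : ((0 : R)%:E <= (tau k)%:E)%E by rewrite lee_fin.
  rewrite E le_min; apply/andP; split.
    by rewrite lee_fin; apply: mulr_ge0 => //; lra.
  rewrite /tau_trial /=; case: ifP => [_|Dn]; first exact: leey.
  have Dp : 0 < Dval r sigma_u (alpha k) (x k) (g (x k)) (v k + u k) by rewrite ltNge Dn.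
  rewrite lee_fin; apply: divr_ge0; last exact: ltW.
  by apply: mulr_ge0; [lra | rewrite subr_ge0; exact: HN].
split.
  move=> [|k] // _ E.
  have v0 := H1' k.+1 E.
  have Dle : Dval r sigma_u (alpha k.+1) (x k.+1) (g (x k.+1)) (v k.+1 + u k.+1) <= 0.
    by have := HD k.+1; rewrite v0 enorm0 expr0n /= mul0r mulr0 addr0.
  have TT : tau_trial r sigma_c sigma_u (alpha k.+1) (x k.+1) (g (x k.+1)) (c (x k.+1))
     (J (x k.+1)) (v k.+1) (v k.+1 + u k.+1) = +oo%E by rewrite /tau_trial /= Dle.
  split => //.
  have h3 := H3 k.+1; cbv zeta in h3; move: h3.
  by rewrite TT leey.
pose m0 := Order.min kappa_v (1 / (KJ' ^+ 2 * alpha0)).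
have m00 : 0 < m0 by rewrite /m0 lt_min kv0 /= divr_gt0 // mulr_gt0 // exprn_gt0.
pose C := (G' + Kr') * kappa_v + kappa_v ^+ 2 * KJ' * Kc' + 1.
have C0 : 0 < C.
  rewrite /C; have := mulr_ge0 (addr_ge0 G'0 Kr'0) (ltW kv0).
  have := mulr_ge0 (mulr_ge0 (sqr_ge0 kappa_v) (ltW KJ'0)) (ltW Kc'0); lra.
exists ((1 - sigma_c) * m0 / (2 * Kc' * C)); split.
  by rewrite divr_gt0 ?mulr_gt0 //; lra.
move=> [|k] // _ NE lt.
rewrite /= in lt *.
have h3 := H3 k.+1; cbv zeta in h3; move: h3.
case: ifP => [_ E|Hn _]; first by rewrite E /= ltxx in lt.
move: Hn; rewrite /tau_trial /=; case: ifP => [_|Dn]; first by rewrite leey.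
have Dp : 0 < Dval r sigma_u (alpha k.+1) (x k.+1) (g (x k.+1)) (v k.+1 + u k.+1) by rewrite ltNge Dn.
rewrite lee_fin => /negbT; rewrite -ltNge => tt.
have [al0 ala] := Hal k.+1.
have [_ [Hvb [bc [hbc [Hmin Hv]]]]] := H1 k.+1 NE.
pose beta := Order.min (kappa_v * alpha k.+1) (1 / KJ' ^+ 2).
have hb : 0 <= beta <= kappa_v * alpha k.+1.
  rewrite /beta ge_min lexx /= andbT le_min; apply/andP; split.
    by apply: mulr_ge0; apply: ltW.
  by rewrite divr_ge0 // ?sqr_ge0.
have bK : beta * KJ' ^+ 2 <= 1.
  have : beta <= 1 / KJ' ^+ 2 by rewrite /beta ge_min lexx orbT.
  by rewrite ler_pdivlMr ?exprn_gt0.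
have bm : alpha k.+1 * m0 <= beta.
  rewrite /beta /m0 le_min; apply/andP; split.
    by rewrite mulrC; apply: ler_wpM2r; [exact: ltW | rewrite ge_min lexx].
  rewrite ler_pdivlMr ?exprn_gt0 //.
  have : m0 <= 1 / (KJ' ^+ 2 * alpha0) by rewrite /m0 ge_min lexx orbT.
  rewrite ler_pdivlMr ?mulr_gt0 ?exprn_gt0 //; try lra.
  move=> h.
  have : alpha k.+1 * m0 * KJ' ^+ 2 <= alpha0 * m0 * KJ' ^+ 2.
    by apply: ler_wpM2r; [exact: sqr_ge0 | apply: ler_wpM2r => //; exact: ltW].
  have -> : alpha0 * m0 * KJ' ^+ 2 = m0 * (KJ' ^+ 2 * alpha0) by ring.
  rewrite -/m0; lra.
have cd := cauchy_dec hbc Hmin Hv hb.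
have nb := num_bound (proj1 (andP hb)) bK (ltW KJ'0) (HJ' k.+1) (HC' k.+1) cd (HN k.+1).
have W0 : 0 < enorm ((J (x k.+1))^T *m c (x k.+1)).
  rewrite lt_neqAle enorm_ge0 andbT eq_sym; apply/eqP => /enorm_eq0 E.
  by rewrite E eqxx in NE.
have WK : enorm ((J (x k.+1))^T *m c (x k.+1)) <= KJ' * Kc'.
  apply: le_trans (JT_bound _ (ltW KJ'0) (HJ' k.+1)) _.
  by apply: ler_wpM2l; [exact: ltW | exact: HC'].
have t0 := Htau k.+1; rewrite /= in t0.
have FA := (final_alg al0 W0 WK KJ'0 Kc'0 (enorm_ge0 _) Hvb kv0 (addr_ge0 G'0 Kr'0) Dp (HD k.+1) _ nb bm m00 sc1 tt t0).
by apply: FA; rewrite subr_ge0; exact: HN.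
Qed.
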